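(* Let $m\le n$ be positive integers, $A$ a Hermitian $n\times n$ matrix, and $v_1,\dots,v_m\in\mathbb C^n$ orthonormal vectors satisfying $(A-\lambda_jI)v_j=r_j$ for real scalars $\lambda_j$ and vectors $r_j\in\mathbb C^n$, $1\le j\le m$. Then there are $m$ eigenvalues $\alpha_1,\dots,\alpha_m$ of $A$ (counted with multiplicity), in one-to-one correspondence with the $\lambda_j$, such that $|\lambda_j-\alpha_j|\le2m\sup_{1\le i\le m}\|r_i\|_2$ for all $1\le j\le m$. *)

(* Defs.v *)
From mathcomp Require Import all_boot all_algebra.
From mathcomp Require Export reals.
From mathcomp.real_closed Require Export complex.
Import GRing.Theory Num.Theory.
Local Open Scope ring_scope.

Definition ctrmx {C : numClosedFieldType} {m n : nat} (A : 'M[C]_(m, n)) : 'M[C]_(n, m) :=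
  (map_mx Num.conj A)^T.

Definition hermitian_mx {C : numClosedFieldType} {n : nat} (A : 'M[C]_n) : Prop :=
  ctrmx A = A.

Definition cdot {C : numClosedFieldType} {n : nat} (u v : 'cV[C]_n) : C :=
  (ctrmx u *m v) 0 0.

(* Euclidean 2-norm of a column vector (a nonnegative real, as an element of C) *)
Definition norm2 {C : numClosedFieldType} {n : nat} (v : 'cV[C]_n) : C :=
  sqrtC (\sum_(i < n) `|v i 0| ^+ 2).

Definition orthonormal_fam {C : numClosedFieldType} {n m : nat} (v : 'I_m -> 'cV[C]_n) : Prop :=
  forall i j : 'I_m, cdot (v i) (v j) = (i == j)%:R.

Definition eigenvalues_with_mult {C : numClosedFieldType} {n : nat} (A : 'M[C]_n)
  (s : n.-tuple C) : Prop :=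
  char_poly A = \prod_(a <- s) ('X - a%:P).

(* Main.v *)
Require Import Defs.
From mathcomp Require Import all_boot all_order all_algebra zify ring.
From mathcomp Require Import reals.
From mathcomp.real_closed Require Import complex.
From mathcomp Require Import spectral.
Import GRing.Theory Num.Theory Order.TTheory.
Set Implicit Arguments. Unset Strict Implicit. Unset Printing Implicit Defensive.

Definition nbh (T U : finType) (adj : T -> U -> bool) (J : {set T}) : {set U} :=
  [set y | [exists x in J, adj x y]].

Lemma nbhU (T U : finType) (adj : T -> U -> bool) (J K : {set T}) :
  nbh adj (J :|: K) = nbh adj J :|: nbh adj K.
Proof.
apply/setP=> y; rewrite !inE; apply/existsP/orP.
  by case=> x /andP[]; rewrite inE => /orP[] xi a; [left|right]; apply/existsP; exists x; rewrite xi.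
by case=> /existsP[x /andP[xi a]]; exists x; rewrite inE xi ?orbT.
Qed.

Lemma nbh_sub (T U : finType) (adj : T -> U -> bool) (J : {set T}) x y :
  x \in J -> adj x y -> y \in nbh adj J.
Proof. by move=> xJ a; rewrite inE; apply/existsP; exists x; rewrite xJ. Qed.

Lemma hall_gen (T U : finType) (u0 : U) (n : nat) : forall (adj : T -> U -> bool) (X : {set T}),
  #|X| <= n ->
  (forall J : {set T}, J \subset X -> #|J| <= #|nbh adj J|) ->
  exists f : T -> U, {in X &, injective f} /\ {in X, forall x, adj x (f x)}.
Proof.
elim: n => [|n IH] adj X.
  rewrite leqn0 cards_eq0 => /eqP -> _.
  by exists (fun _ => u0); split => x; rewrite inE.
move=> cX hX.
case: (leqP #|X| n) => [cXn|]; first exact: IH.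
move=> ltX.
have {cX}cX : #|X| = n.+1 by apply/eqP; rewrite eqn_leq cX ltX.
case: (boolP [exists J : {set T}, [&& J \subset X, J != set0, J != X & #|nbh adj J| <= #|J|]]).
- case/existsP=> J /and4P[sJX J0 JX cJ].
  have pJX : J \proper X by rewrite properEneq JX sJX.
  have [f1 [inj1 adj1]] : exists f : T -> U, {in J &, injective f} /\ {in J, forall x, adj x (f x)}.
    apply: IH; first by rewrite -ltnS -cX proper_card.
    by move=> K sKJ; apply: hX; apply: subset_trans sKJ sJX.
  pose adj2 x y := adj x y && (y \notin nbh adj J).
  have [f2 [inj2 adj2P]] : exists f : T -> U, {in X :\: J &, injective f} /\ {in X :\: J, forall x, adj2 x (f x)}.
    apply: IH.
      rewrite cardsD (setIidPr sJX).
      have : 0 < #|J| by rewrite card_gt0.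
      lia.
    move=> K sK.
    have eN : nbh adj2 K = nbh adj (K :|: J) :\: nbh adj J.
      apply/setP=> y; rewrite nbhU in_setD in_setU {1}/nbh in_set /adj2; apply/existsP/andP.
        case=> x /andP[xK /andP[a b]]; split => //; apply/orP; left.
        exact: nbh_sub xK a.
      case=> b /orP[]; last by rewrite (negbTE b).
      by rewrite inE => /existsP[x /andP[xK a]]; exists x; rewrite xK a.
    rewrite eN cardsD.
    have -> : nbh adj (K :|: J) :&: nbh adj J = nbh adj J.
      by apply/setIidPr; rewrite nbhU subsetUr.
    have dKJ : [disjoint K & J].
      apply/pred0P=> x /=; apply/negbTE/negP=> /andP[xK xJ].
      by move: (subsetP sK x xK); rewrite inE xJ.
    have := hX (K :|: J); rewrite cardsU (disjoint_setI0 dKJ) cards0 subn0.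
    have -> : K :|: J \subset X.
      rewrite subUset sJX andbT; apply: subset_trans sK _; exact: subsetDl.
    move=> /(_ isT); lia.
  exists (fun x => if x \in J then f1 x else f2 x); split.
    move=> x y xX yX /=.
    case: ifP => xJ; case: ifP => yJ.
    + exact: inj1.
    + move=> e; have := adj2P y; rewrite !inE yJ yX /adj2 => /(_ isT) /andP[_].
      by rewrite -e (nbh_sub xJ (adj1 x xJ)).
    + move=> e; have := adj2P x; rewrite !inE xJ xX /adj2 => /(_ isT) /andP[_].
      by rewrite e (nbh_sub yJ (adj1 y yJ)).
    + by apply: inj2; rewrite inE ?xJ ?yJ.
  move=> x xX /=; case: ifP => xJ; first exact: adj1.
  by have := adj2P x; rewrite !inE xJ xX /adj2 => /(_ isT) /andP[].
- move=> noJ.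
  have : 0 < #|X| by rewrite cX.
  rewrite card_gt0 => /set0Pn[x xX].
  have := hX [set x]; rewrite sub1set xX cards1 => /(_ isT).
  rewrite card_gt0 => /set0Pn[y]; rewrite inE => /existsP[x' /andP[]].
  rewrite inE => /eqP -> axy.
  pose adj' a b := adj a b && (b != y).
  have [f [injf adjf]] : exists f : T -> U, {in X :\ x &, injective f} /\ {in X :\ x, forall z, adj' z (f z)}.
    apply: IH.
      by move: cX; rewrite (cardsD1 x X) xX /=; lia.
    move=> K sK.
    case: (eqVneq K set0) => [->|K0]; first by rewrite cards0.
    have lt : #|K| < #|nbh adj K|.
      rewrite ltnNge; apply/negP=> le.
      move/negP: noJ; apply; apply/existsP; exists K.
      rewrite le K0 andbT (subset_trans sK (subsetDl _ _)) /=.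
      apply/eqP=> eKX; move: (subsetP sK x); rewrite eKX xX !inE eqxx => /(_ isT).
      done.
    have : nbh adj K :\ y \subset nbh adj' K.
      apply/subsetP=> z; rewrite !inE => /andP[zy /existsP[w /andP[wK a]]].
      by apply/existsP; exists w; rewrite wK /adj' a zy.
    move=> /subset_leq_card; have := cardsD1 y (nbh adj K).
    case: (y \in nbh adj K) => /=; lia.
  exists (fun z => if z == x then y else f z); split.
    move=> a b aX bX /=.
    case: eqP => [->|ax]; case: eqP => [->|bx] //.
    + move=> e; have := adjf b; rewrite !inE bX (introF eqP bx) /= => /(_ isT).
      by rewrite /adj' e eqxx andbF.
    + move=> e; have := adjf a; rewrite !inE aX (introF eqP ax) /= => /(_ isT).
      by rewrite /adj' e eqxx andbF.
    + by apply: injf; rewrite !inE ?aX ?bX andbT; apply/eqP.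
  move=> z zX /=; case: eqP => [->|zx]//.
  by have := adjf z; rewrite !inE zX (introF eqP zx) /= => /(_ isT) /andP[].
Qed.

Local Open Scope ring_scope.
Section Core.
Variable C : numClosedFieldType.

Lemma kernel_vec m (J : {set 'I_m}) n (N : {set 'I_n}) (w : 'I_m -> 'I_n -> C) :
  (#|N| < #|J|)%N ->
  exists c : 'I_m -> C, [/\ exists j, c j != 0, forall j, j \notin J -> c j = 0 &
     forall i, i \in N -> \sum_j c j * w j i = 0].
Proof.
move=> ltNJ.
pose K1 := \matrix_(j < m, k < #|~: J|) ((j == enum_val k)%:R : C).
pose K2 := \matrix_(j < m, k < #|N|) w j (enum_val k).
pose K := row_mx K1 K2.
have rk : (\rank K < m)%N.
  apply: leq_ltn_trans (rank_leq_col K) _.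
  have := cardsC J; rewrite card_ord; lia.
have kn0 : kermx K != 0 by rewrite -mxrank_eq0 mxrank_ker; lia.
have [k kk] : exists k, row k (kermx K) != 0.
  case: (pickP (fun k => row k (kermx K) != 0)) => [k hk|h]; first by exists k.
  move: kn0; have -> : kermx K = 0.
    by apply/row_matrixP => k; rewrite row0; apply/eqP; move: (h k) => /negbFE.
  by rewrite eqxx.
have [cr [kk' cK]] : exists cr : 'rV_m, cr != 0 /\ cr *m K = 0.
  by exists (row k (kermx K)); split=> //; apply/sub_kermxP; rewrite row_sub.
clear kk.
move: cK; rewrite mul_mx_row => /eqP; rewrite row_mx_eq0 => /andP[/eqP h1 /eqP h2].
exists (fun j => cr 0 j); split.
- case: (pickP (fun j => cr 0 j != 0)) => [j hj|h]; first by exists j.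
  have cr0 : cr = 0.
    apply/rowP => j; rewrite [RHS]mxE; apply/eqP; exact: negbFE (h j).
  by move: kk'; rewrite cr0 eqxx.
- move=> j jJ; have jC : j \in ~: J by rewrite inE.
  move/matrixP: h1 => /(_ 0 (enum_rank_in jC j)).
  rewrite !mxE (bigD1 j) //= mxE enum_rankK_in // eqxx mulr1 big1 ?addr0 //.
  by move=> j' /negbTE nj; rewrite mxE enum_rankK_in // nj mulr0.
- move=> i iN; move/matrixP: h2 => /(_ 0 (enum_rank_in iN i)).
  rewrite !mxE => h; rewrite -[RHS]h; apply: eq_bigr => j _.
  by rewrite /K2 mxE enum_rankK_in.
Qed.

Lemma cs m (a : 'I_m -> C) : (forall j, 0 <= a j) ->
  (\sum_j a j) ^+ 2 <= m%:R * \sum_j a j ^+ 2.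
Proof.
move=> a0; have aR j : a j \is Num.real by apply: ger0_real.
rewrite -(ler_pMn2r (n := 2%N)) //.
have -> : (\sum_j a j) ^+ 2 *+ 2 = \sum_i \sum_j (a i * a j *+ 2).
  rewrite expr2 mulr_suml -sumrMnl; apply: eq_bigr => i _.
  by rewrite mulr_sumr -sumrMnl.
apply: (@le_trans _ _ (\sum_i \sum_j (a i ^+ 2 + a j ^+ 2))).
  apply: ler_sum => i _; apply: ler_sum => j _.
  exact: (real_leif_mean_square_scaled (aR i) (aR j)).1.
rewrite (eq_bigr (fun i => a i ^+ 2 *+ m + \sum_j a j ^+ 2)); last first.
  by move=> i _; rewrite big_split /= sumr_const card_ord.
by rewrite big_split /= sumrMnl sumr_const card_ord mulr_natl mulr2n.
Qed.

Lemma core m n (w rho : 'I_m -> 'I_n -> C) (d : 'I_n -> C) (lam : 'I_m -> C) (e : C) :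
  (0 < m)%N -> 0 <= e ->
  (forall a b, \sum_i (w a i)^* * w b i = (a == b)%:R) ->
  (forall j, \sum_i `|rho j i| ^+ 2 <= e ^+ 2) ->
  (forall j i, (d i - lam j) * w j i = rho j i) ->
  forall J : {set 'I_m}, (#|J| <= #|nbh (fun (j : 'I_m) (i : 'I_n) => (`|lam j - d i| <= 2 * m%:R * e)%R) J|)%N.
Proof.
move=> m0 e0 ortho hrho hw J.
set N := nbh _ J.
rewrite leqNgt; apply/negP => ltNJ.
have [c [[j0 cj0] cJ cN]] := kernel_vec w ltNJ.
pose S := \sum_j `|c j| ^+ 2.
have S0 : 0 < S.
  rewrite /S (bigD1 j0) //=; apply: ltr_pwDl.
    by rewrite exprn_gt0 // normr_gt0.
  by rewrite sumr_ge0 // => j _; rewrite exprn_ge0.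
pose y i := \sum_j c j * w j i.
have Sy : \sum_i `|y i| ^+ 2 = S.
  rewrite /S; under eq_bigr do rewrite normCKC; under [RHS]eq_bigr do rewrite normCKC.
  transitivity (\sum_i \sum_a \sum_b (((c a)^* * c b) * ((w a i)^* * w b i))).
    apply: eq_bigr => i _; rewrite /y rmorph_sum mulr_suml; apply: eq_bigr => a _.
    rewrite mulr_sumr; apply: eq_bigr => b _; rewrite rmorphM; exact: mulrACA.
  rewrite exchange_big; apply: eq_bigr => a _; rewrite exchange_big.
  transitivity (\sum_b ((c a)^* * c b * (a == b)%:R)).
    by apply: eq_bigr => b _; rewrite -mulr_sumr ortho.
  rewrite (bigD1 a) //= eqxx mulr1 big1 ?addr0 // => b /negbTE.
  by rewrite eq_sym => ->; rewrite mulr0.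
have eR : e \is Num.real by apply: ger0_real.
have notN i j : i \notin N -> j \in J -> 2 * m%:R * e < `|d i - lam j|.
  move=> iN jJ; rewrite distrC real_ltNge ?ger0_real ?mulr_ge0 //.
  apply: contra iN => h; rewrite inE; apply/existsP; exists j; rewrite jJ h.
  done.
case: (eqVneq e 0) => [e0'|en0].
  have rho0 j i : rho j i = 0.
    have := hrho j; rewrite e0' expr0n /= => hs.
    have hs0 : \sum_i `|rho j i| ^+ 2 = 0.
      by apply/eqP; rewrite eq_le hs sumr_ge0 // => *; rewrite exprn_ge0.
    have := psumr_eq0P _ hs0.
    move=> /(_ (fun i _ => exprn_ge0 2 (normr_ge0 (rho j i))) i isT).
    by move=> /eqP; rewrite expf_eq0 /= normr_eq0 => /eqP.
  have y0 i : y i = 0.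
    case: (boolP (i \in N)) => iN; first exact: cN.
    apply: big1 => j _; case: (boolP (j \in J)) => jJ; last by rewrite cJ // mul0r.
    have := notN i j iN jJ; rewrite e0' mulr0 normr_gt0 => dn0.
    have := hw j i; rewrite rho0 => /eqP; rewrite mulf_eq0 (negbTE dn0) /= => /eqP ->.
    by rewrite mulr0.
  have : \sum_i `|y i| ^+ 2 = 0 by apply: big1 => i _; rewrite y0 normr0 expr0n.
  by rewrite Sy => S00; move: S0; rewrite S00 ltxx.
have ep : 0 < e by rewrite lt_def en0 e0.
pose E := (2 * m%:R * e) ^+ 2.
have E0 : 0 <= E by apply: exprn_ge0; rewrite !mulr_ge0 ?ler0n // ltW.
have T j : j \in J -> E * \sum_(i | i \notin N) `|w j i| ^+ 2 <= e ^+ 2.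
  move=> jJ; apply: le_trans (hrho j); rewrite mulr_sumr.
  apply: (@le_trans _ _ (\sum_(i | i \notin N) `|rho j i| ^+ 2)).
    apply: ler_sum => i iN; rewrite -hw normrM exprMn ler_wpM2r ?exprn_ge0 //.
    have h := notN _ _ iN jJ; have h0 : 0 <= 2 * m%:R * e by rewrite !mulr_ge0 ?ler0n.
    by rewrite /E lerXn2r ?nnegrE ?(ltW h) ?(le_trans h0 (ltW h)).
  rewrite [X in _ <= X](bigID (fun i => i \notin N)) /= lerDl sumr_ge0 // => *.
  by rewrite exprn_ge0.
have Yi i : `|y i| ^+ 2 <= m%:R * \sum_j `|c j| ^+ 2 * `|w j i| ^+ 2.
  apply: (@le_trans _ _ ((\sum_j `|c j * w j i|) ^+ 2)).
    by rewrite lerXn2r ?nnegrE ?sumr_ge0 // ler_norm_sum.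
  apply: le_trans (cs _) _ => //.
  by under eq_bigr do rewrite normrM exprMn.
have SN : S = \sum_(i | i \notin N) `|y i| ^+ 2.
  rewrite -Sy (bigID (fun i => i \notin N)) /= [X in _ + X]big1 ?addr0 // => i.
  by rewrite negbK => iN; rewrite /y (cN i iN) normr0 expr0n.
have key : E * S <= m%:R * (S * e ^+ 2).
  rewrite {1}SN mulr_sumr.
  apply: (@le_trans _ _ (\sum_(i | i \notin N) E * (m%:R * \sum_j `|c j| ^+ 2 * `|w j i| ^+ 2))).
    by apply: ler_sum => i _; rewrite ler_wpM2l.
  have -> : \sum_(i | i \notin N) E * (m%:R * \sum_j `|c j| ^+ 2 * `|w j i| ^+ 2) =
      \sum_j m%:R * (`|c j| ^+ 2 * (E * \sum_(i | i \notin N) `|w j i| ^+ 2)).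
    transitivity (\sum_(i | i \notin N) \sum_j m%:R * (`|c j| ^+ 2 * (E * `|w j i| ^+ 2))).
      apply: eq_bigr => i _; rewrite !mulr_sumr; apply: eq_bigr => j _.
      by ring.
    rewrite exchange_big; apply: eq_bigr => j _.
    by rewrite !mulr_sumr.
  rewrite /S mulr_suml mulr_sumr; apply: ler_sum => j _.
  rewrite ler_wpM2l ?ler0n //.
  case: (boolP (j \in J)) => jJ; last by rewrite cJ // normr0 expr0n !mul0r.
  by rewrite ler_wpM2l ?exprn_ge0 // T.
have : (2 * m%:R) ^+ 2 * (e ^+ 2 * S) <= m%:R * (e ^+ 2 * S).
  have -> : (2 * m%:R) ^+ 2 * (e ^+ 2 * S) = E * S by rewrite /E; ring.
  by have -> : m%:R * (e ^+ 2 * S) = m%:R * (S * e ^+ 2) by ring.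
rewrite ler_pM2r ?mulr_gt0 ?exprn_gt0 // -natrM -natrX ler_nat.
nia.
Qed.

End Core.

Section S.
Variable C : numClosedFieldType.
Local Open Scope sesquilinear_scope.

Lemma ctrmx_tc m n (A : 'M[C]_(m, n)) : ctrmx A = A ^t*.
Proof. by rewrite /ctrmx map_trmx. Qed.

Lemma ctrmxM m n p (A : 'M[C]_(m, n)) (B : 'M[C]_(n, p)) : ctrmx (A *m B) = ctrmx B *m ctrmx A.
Proof. by rewrite /ctrmx map_mxM trmx_mul. Qed.

Lemma cdot_unitary n (P : 'M[C]_n) (u u' : 'cV[C]_n) : P \is unitarymx ->
  cdot (P *m u) (P *m u') = cdot u u'.
Proof.
move=> /unitarymxP /mulmx1C PP.
by rewrite /cdot ctrmxM -mulmxA (mulmxA (ctrmx P)) [ctrmx P]ctrmx_tc PP mul1mx.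
Qed.

Lemma cdotE n (u u' : 'cV[C]_n) : cdot u u' = \sum_i (u i 0)^* * u' i 0.
Proof. by rewrite /cdot !mxE; apply: eq_bigr => i _; rewrite !mxE. Qed.

Lemma cdot_sq n (u : 'cV[C]_n) : cdot u u = \sum_i `|u i 0| ^+ 2.
Proof. by rewrite cdotE; apply: eq_bigr => i _; rewrite normCKC. Qed.


Lemma char_poly_conj n (Q B : 'M[C]_n) : Q \in unitmx ->
  char_poly (invmx Q *m B *m Q) = char_poly B.
Proof.
move=> Qu; rewrite /char_poly /char_poly_mx.
pose Qi := map_mx (@polyC C) (invmx Q); pose Q' := map_mx (@polyC C) Q.
have QQ : Qi *m Q' = 1%:M by rewrite -map_mxM mulVmx // map_mx1.
have -> : 'X%:M - map_mx (@polyC C) (invmx Q *m B *m Q) =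
   Qi *m ('X%:M - map_mx (@polyC C) B) *m Q'.
  rewrite !map_mxM mulmxBr mulmxBl -/Qi -/Q'; congr (_ - _).
  by rewrite scalar_mxC -mulmxA QQ mulmx1.
by rewrite !det_mulmx mulrAC -det_mulmx QQ det1 mul1r.
Qed.

Lemma bigmax_prop m (F : 'I_m -> C) : (forall i, 0 <= F i) ->
  0 <= \big[Num.max/0]_(i < m) F i /\ forall j, F j <= \big[Num.max/0]_(i < m) F i.
Proof.
move=> F0.
suff H : forall r : seq 'I_m, 0 <= \big[Num.max/0]_(i <- r) F i /\
   forall j, j \in r -> F j <= \big[Num.max/0]_(i <- r) F i.
  by have [h1 h2] := H (index_enum 'I_m); split=> // j; apply: h2; rewrite mem_index_enum.
elim=> [|a r [h0 h1]]; rewrite ?big_nil ?big_cons; first by split.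
have cmp : (F a >=< \big[Num.max/0]_(i <- r) F i)%R by rewrite real_comparable ?ger0_real.
split; first by rewrite comparable_le_max // h0 orbT.
move=> j; rewrite in_cons => /orP[/eqP->|jr]; rewrite comparable_le_max //.
  by rewrite lexx.
by rewrite h1 ?orbT.
Qed.

End S.

Local Open Scope sesquilinear_scope.

Theorem theorem4p2 (R : realType) (m n : nat) (Hm : (0 < m)%N) (Hmn : (m <= n)%N)
  (A : 'M[R[i]]_n) (HA : hermitian_mx A)
  (v : 'I_m -> 'cV[R[i]]_n) (Hv : orthonormal_fam v)
  (lambda : 'I_m -> R[i]) (Hlam : forall j, lambda j \is Num.real)
  (r : 'I_m -> 'cV[R[i]]_n)
  (Hr : forall j, (A - lambda j *: 1%:M) *m v j = r j) :
  exists s : n.-tuple R[i], eigenvalues_with_mult A s /\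
  exists sigma : 'I_m -> 'I_n, injective sigma /\
    forall j : 'I_m,
      `|lambda j - tnth s (sigma j)| <=
        2 * m%:R * \big[Num.max/0]_(i < m) norm2 (r i).
Proof.
have normA : A \is normalmx.
  by apply/normalmxP; rewrite -ctrmx_tc HA.
have hA := orthomx_spectralP normA.
set P := spectralmx A in hA; set dd := spectral_diag A in hA.
have Pun : P \is unitarymx by apply: spectral_unitarymx.
have Pu : P \in unitmx by apply: spectral_unit.
have PA : P *m A = diag_mx dd *m P by rewrite {1}hA !mulmxA mulmxV // mul1mx.
exists [tuple dd 0 i | i < n]; split.
  rewrite /eigenvalues_with_mult hA char_poly_conj // char_poly_trig ?diag_mx_is_trig //.
  rewrite big_tuple; apply: eq_bigr => i _; rewrite tnth_mktuple mxE eqxx mulr1n.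
  done.
set e := \big[Num.max/0]_(i < m) norm2 (r i).
have n2ge0 j : 0 <= norm2 (r j) by rewrite /norm2 sqrtC_ge0 sumr_ge0 // => *; rewrite exprn_ge0.
have [e0 ege] := bigmax_prop n2ge0.
pose w a i := (P *m v a) i 0.
pose rho j i := (P *m r j) i 0.
have ortho a b : \sum_i (w a i)^* * w b i = (a == b)%:R.
  by rewrite -Hv -(cdot_unitary _ _ Pun) cdotE.
have hrho j : \sum_i `|rho j i| ^+ 2 <= e ^+ 2.
  rewrite -cdot_sq cdot_unitary // cdot_sq -[X in X <= _]sqrtCK.
  by rewrite lerXn2r ?nnegrE //; [exact: n2ge0 j | exact: ege j].
have hw j i : (dd 0 i - lambda j) * w j i = rho j i.
  have : P *m r j = diag_mx dd *m (P *m v j) - lambda j *: (P *m v j).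
    by rewrite -Hr mulmxA mulmxBr PA -scalemxAr mulmx1 mulmxBl !mulmxA scalemxAl.
  move/matrixP => /(_ i 0); rewrite /rho /w => ->.
  by rewrite mul_diag_mx !mxE mulrBl.
have n0 : (0 < n)%N by apply: leq_trans Hmn.
have cT : (#|[set: 'I_m]| <= m)%N by rewrite cardsT card_ord.
have [f [finj fadj]] := @hall_gen _ _ (Ordinal n0) m
   (fun (j : 'I_m) (i : 'I_n) => (`|lambda j - dd 0 i| <= 2 * m%:R * e)%R) setT cT
   (fun J _ => core Hm e0 ortho hrho hw J).
exists f; split.
  by move=> a b; apply: finj; rewrite inE.
by move=> j; rewrite tnth_mktuple; apply: fadj; rewrite inE.
Qed.
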